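(* Let $f:\mathbb{R}^n\to\mathbb{R}$ be a continuous, $L$-smooth loss function with global minimum $w^*$, and let $E(w):=f(w)-f(w^* )$. Let $w_i$ and $w_{i+1}$ be two subsequent points of a sequence generated by the Loss-Guarded L2O algorithm using deterministic gradient descent with step size $\alpha/L$ (for some $\alpha>0$) as the guarding mechanism. Then $$E(w_{i+1})-E(w_i)\le -\frac{\alpha}{L}\Big(1-\frac{\alpha}{2}\Big)\|\nabla f(w_i)\|_2^2$$ and $$E(w_i)\ge \frac{\alpha}{L}\Big(1-\frac{\alpha}{2}\Big)\|\nabla f(w_i)\|_2^2.$$
   Context: Loss-Guarded L2O algorithm with deterministic gradient descent: at each step $i$, an arbitrary black-box rule proposes a point $y_i$, the fallback proposes $z_i=w_i-\frac{\alpha}{L}\nabla f(w_i)$, and $w_{i+1}=y_i$ if $f(y_i)<f(z_i)$, otherwise $w_{i+1}=z_i$. $f$ is $L$-smooth means $f(y)\le f(x)+\langle\nabla f(x),y-x\rangle+\frac{L}{2}\|y-x\|_2^2$ for all $x,y$. *)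

(* Defs.v *)
From HB Require Import structures.
From mathcomp Require Import all_boot all_order all_algebra.
From mathcomp Require Import all_classical all_reals all_analysis.
Set Implicit Arguments. Unset Strict Implicit. Unset Printing Implicit Defensive.
Import Order.TTheory GRing.Theory Num.Theory.
Import numFieldNormedType.Exports.
Local Open Scope ring_scope.

Definition dotv (R : realType) (n : nat) (u v : 'rV[R]_n) : R :=
  \sum_(i < n) u 0 i * v 0 i.
Definition norm2sq (R : realType) (n : nat) (v : 'rV[R]_n) : R := dotv v v.

Definition grad (R : realType) (n : nat) (f : 'rV[R]_n -> R) (x : 'rV[R]_n)
  : 'rV[R]_n := \row_(i < n) ('D_(delta_mx 0 i) f x).

Definition L_smooth (R : realType) (n : nat) (f : 'rV[R]_n -> R) (L : R) : Prop :=
  forall x y : 'rV[R]_n,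
    f y <= f x + dotv (grad f x) (y - x) + L / 2 * norm2sq (y - x).

Definition gd_step (R : realType) (n : nat) (f : 'rV[R]_n -> R) (L alpha : R)
  (w : 'rV[R]_n) : 'rV[R]_n := w - (alpha / L) *: grad f w.

Definition loss_guarded_step (R : realType) (n : nat) (f : 'rV[R]_n -> R)
  (L alpha : R) (w y : 'rV[R]_n) : 'rV[R]_n :=
  if f y < f (gd_step f L alpha w) then y else gd_step f L alpha w.

(* Main.v *)
Require Import Defs.
From HB Require Import structures.
From mathcomp Require Import all_boot all_order all_algebra.
From mathcomp Require Import all_classical all_reals all_analysis.
From mathcomp Require Import ring lra.
Import Order.TTheory GRing.Theory Num.Theory.
Import numFieldNormedType.Exports.
Local Open Scope ring_scope.

Lemma dotv_scaler (R : realType) (n : nat) (c : R) (u v : 'rV[R]_n) :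
  dotv u (c *: v) = c * dotv u v.
Proof.
rewrite /dotv mulr_sumr; apply: eq_bigr => i _; rewrite mxE; ring.
Qed.

Lemma dotv_scalel (R : realType) (n : nat) (c : R) (u v : 'rV[R]_n) :
  dotv (c *: u) v = c * dotv u v.
Proof.
rewrite /dotv mulr_sumr; apply: eq_bigr => i _; rewrite mxE; ring.
Qed.

Theorem proposition1 (R : realType) (n : nat) (f : 'rV[R]_n -> R) (L alpha : R)
  (wstar : 'rV[R]_n) (w y : nat -> 'rV[R]_n) :
  continuous f ->
  (forall x, differentiable f x) ->
  0 < L -> L_smooth f L ->
  (forall v, f wstar <= f v) ->
  0 < alpha ->
  (forall i, w i.+1 = loss_guarded_step f L alpha (w i) (y i)) ->
  forall i,
    (f (w i.+1) - f wstar) - (f (w i) - f wstar)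
      <= - (alpha / L * (1 - alpha / 2) * norm2sq (grad f (w i)))
    /\ alpha / L * (1 - alpha / 2) * norm2sq (grad f (w i)) <= f (w i) - f wstar.
Proof.
move=> _ _ L0 Hs Hmin a0 Hw i.
set g := grad f (w i).
set z := gd_step f L alpha (w i).
have Hz : f (w i.+1) <= f z.
  rewrite Hw /loss_guarded_step -/z; case: ifP => [/ltW //|_]; exact: lexx.
have Hdiff : z - w i = (- (alpha / L)) *: g.
  by rewrite /z /gd_step scaleNr addrAC subrr add0r.
have Hsm := Hs (w i) z.
rewrite Hdiff /norm2sq dotv_scaler dotv_scalel dotv_scaler -/g in Hsm.
have Lne : L != 0 by rewrite gt_eqF.
have E : f (w i) + - (alpha / L) * dotv g g +
   L / 2 * (- (alpha / L) * (- (alpha / L) * dotv g g))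
   = f (w i) - alpha / L * (1 - alpha / 2) * norm2sq g.
  rewrite /norm2sq; field; exact: Lne.
rewrite E in Hsm.
have H1 := le_trans Hz Hsm.
have H2 := Hmin (w i.+1).
split; lra.
Qed.
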